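(* Let $\mathcal{X},\mathcal{Y}$ be finite sets with $|\mathcal{X}|,|\mathcal{Y}|\ge2$, $\mathcal{A}=\{0,1\}$, $x^*\in\mathcal{X}$ fixed, and $\epsilon_A\in[0,1)$. The set $\mathcal{P}_2^{x^*,A,\epsilon_A}$ is a convex polytope, and for every vertex $p^{ext}$ of it one has $p^{ext}(a|x^*y)\in\{0,\epsilon_A,1-\epsilon_A,1\}$ for all $a\in\mathcal{A}$, $y\in\mathcal{Y}$.
   Context: For finite sets $\mathcal{Y},\mathcal{A}$, a fixed input $x^*$ and $\epsilon_A\in[0,1]$, $\mathcal{P}_2^{x^*,A,\epsilon_A}$ is the set of all vectors $(p(a|x^*y))_{a\in\mathcal{A},y\in\mathcal{Y}}$ for which there exist a probability space $(\Lambda,q)$ and measurable families of probability distributions $p_A(\cdot|x^*,y,\lambda)$ on $\mathcal{A}$ such that $p(a|x^*y)=\int q(d\lambda)\,p_A(a|x^*y\lambda)$ for all $a,y$ and $\frac12\sum_a|p_A(a|x^*y\lambda)-p_A(a|x^*y'\lambda)|\le\epsilon_A$ for all $y,y',\lambda$. *)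

(* Defs.v *)
From HB Require Import structures.
From mathcomp Require Import all_boot all_order all_algebra.
From mathcomp Require Import all_classical all_reals all_analysis.
Set Implicit Arguments. Unset Strict Implicit. Unset Printing Implicit Defensive.
Import Order.TTheory GRing.Theory Num.Theory.
Local Open Scope ring_scope.

(* A vector (p(a|x* y))_{a,y} is represented as a function  Y -> A -> R,
   p y a = p(a|x* y).  The fixed input x* only labels the vectors. *)

Definition tvdist (R : realType) (A : finType) (u v : A -> R) : R :=
  2^-1 * \sum_(a : A) `|u a - v a|.

Definition P2 (R : realType) (X Y A : finType) (xs : X) (eps : R)
    (p : Y -> A -> R) : Prop :=
  exists (d : measure_display) (L : measurableType d) (q : probability L R)
         (pA : L -> Y -> A -> R),
    [/\ (forall y a, measurable_fun setT (fun l => pA l y a)),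
        (forall l y a, 0 <= pA l y a),
        (forall l y, \sum_(a : A) pA l y a = 1),
        (forall y a, ((p y a)%:E = \int[q]_(l in setT) (pA l y a)%:E)%E) &
        (forall l y y', tvdist (pA l y) (pA l y') <= eps)].

Definition is_convex_set (R : realType) (Y A : Type) (P : (Y -> A -> R) -> Prop)
  : Prop :=
  forall u v t, P u -> P v -> 0 <= t <= 1 ->
    P (fun y a => t * u y a + (1 - t) * v y a).

Definition is_polytope (R : realType) (Y A : Type) (P : (Y -> A -> R) -> Prop)
  : Prop :=
  exists (n : nat) (s : 'I_n -> Y -> A -> R),
    forall p, P p <->
      exists w : 'I_n -> R,
        [/\ (forall i, 0 <= w i), \sum_(i < n) w i = 1 &
            forall y a, p y a = \sum_(i < n) w i * s i y a].

Definition is_vertex (R : realType) (Y A : Type) (P : (Y -> A -> R) -> Prop)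
  (p : Y -> A -> R) : Prop :=
  P p /\
  forall u v t, P u -> P v -> 0 < t < 1 ->
    p = (fun y a => t * u y a + (1 - t) * v y a) -> u = p /\ v = p.

(* Main.v *)
Require Import Defs.
From HB Require Import structures.
From mathcomp Require Import all_boot all_order all_algebra.
From mathcomp Require Import all_classical all_reals all_analysis.
From mathcomp Require Import ring lra measurable_realfun.
Import Order.TTheory GRing.Theory Num.Theory.
Set Implicit Arguments. Unset Strict Implicit.
Local Open Scope ring_scope.

Definition Sp (R : realType) (Y : finType) (eps : R) (p : Y -> 'I_2 -> R) :=
  [/\ (forall y a, 0 <= p y a), (forall y, \sum_a p y a = 1) &
      (forall y y', p y ord0 <= p y' ord0 + eps)].

Lemma sum2 (R : realType) (f : 'I_2 -> R) a : a != ord0 ->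
  \sum_i f i = f ord0 + f a.
Proof.
move=> a0; rewrite (bigD1 ord0) //=; congr (_ + _).
rewrite (big_pred1 a) // => i; apply/idP/idP.
  move=> i0; apply/eqP; apply/val_inj.
  move: i0 a0; case: i => [[|[|i]]] //= Hi; case: a => [[|[|a]]] //=.
by move/eqP => ->.
Qed.

Definition a1 : 'I_2 := lift ord0 ord0.
Lemma a1_ne0 : a1 != ord0. Proof. by []. Qed.

Lemma tv2 (R : realType) (f g : 'I_2 -> R) : \sum_a f a = 1 -> \sum_a g a = 1 ->
  tvdist f g = `|f ord0 - g ord0|.
Proof.
rewrite /tvdist !(sum2 _ a1_ne0) => hf hg.
have -> : f a1 = 1 - f ord0 by rewrite -hf addrC addKr.
have -> : g a1 = 1 - g ord0 by rewrite -hg addrC addKr.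
have -> : (1 - f ord0) - (1 - g ord0) = - (f ord0 - g ord0) by ring.
rewrite normrN.
by field.
Qed.

Lemma P2_Sp (R : realType) (X Y : finType) (xs : X) (eps : R) p :
  0 <= eps -> @P2 R X Y _ xs eps p -> Sp eps p.
Proof.
move=> e0 [d [L [q [pA [mA pA0 pA1 pE pT]]]]].
split.
- move=> y a; rewrite -lee_fin pE; apply: integral_ge0 => l _.
  by rewrite lee_fin.
- move=> y; apply/EFin_inj; rewrite (sum2 _ a1_ne0) EFinD !pE.
  rewrite -ge0_integralD; [|done|by move=> l _; rewrite lee_fin pA0|exact/measurable_EFinP|by move=> l _; rewrite lee_fin pA0|exact/measurable_EFinP].
  rewrite (eq_integral (cst 1%:E)); last first.
    by move=> l _; rewrite -EFinD -(sum2 _ a1_ne0) pA1.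
  rewrite integral_cst // mul1e. exact: probability_setT.
- move=> y y'; rewrite -lee_fin EFinD pE pE.
  rewrite -[X in (_ + X)%E]mule1 -(@probability_setT _ _ _ q) -integral_cst //.
  rewrite -ge0_integralD; [|done|by move=> l _; rewrite lee_fin pA0|exact/measurable_EFinP|by move=> l _; rewrite lee_fin|exact: measurable_cst].
  apply: ge0_le_integral => //.
  + by move=> l _; rewrite lee_fin pA0.
  + exact/measurable_EFinP.
  + by apply/measurable_EFinP; apply: measurable_funD => //; exact: measurable_cst.
  move=> l _; rewrite lee_fin /=.
  have := pT l y y'; rewrite tv2 // => h.
  rewrite -lerBlDl; apply: le_trans h; exact: ler_norm.
Qed.

Lemma Sp_P2 (R : realType) (X Y : finType) (xs : X) (eps : R) p :
  Sp eps p -> @P2 R X Y _ xs eps p.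
Proof.
move=> [p0 p1 pe].
exists _, R, (@dirac _ R 0 R), (fun _ => p); split => //.
- move=> y a; rewrite integral_cst //.
  transitivity ((p y a)%:E * 1)%E; first by rewrite mule1.
  congr (_ * _)%E; symmetry; exact: diracT.
- move=> _ y y'; rewrite tv2 // ler_norml; apply/andP; split.
    by have := pe y' y; lra.
  by have := pe y y'; lra.
Qed.
Definition Wt (R : realType) (Y : finType) (dl : Y -> R) (v : {ffun Y -> bool}) : R :=
  \prod_y (if v y then dl y else 1 - dl y).

Lemma Wt_sum (R : realType) (Y : finType) (dl : Y -> R) :
  \sum_v Wt dl v = 1.
Proof.
rewrite /Wt -(bigA_distr_bigA (fun y b => if b then dl y else 1 - dl y)).
apply: big1 => y _.
change (\sum_(j : bool) (if j then dl y else 1 - dl y) = 1).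
by rewrite (@big_bool R 0 +%R) /= addrC subrK.
Qed.

Lemma Wt_ge0 (R : realType) (Y : finType) (dl : Y -> R) v :
  (forall y, 0 <= dl y <= 1) -> 0 <= Wt dl v.
Proof.
move=> h; apply: prodr_ge0 => y _; have := h y; case: (v y); lra.
Qed.

Lemma Wt_coord (R : realType) (Y : finType) (dl : Y -> R) z :
  \sum_v Wt dl v * (v z)%:R = dl z.
Proof.
pose G y b := (if b then dl y else 1 - dl y) * (if y == z then b%:R else 1).
have E : forall v : {ffun Y -> bool}, Wt dl v * (v z)%:R = \prod_y G y (v y).
  move=> v; rewrite /G big_split /= /Wt; congr (_ * _).
  rewrite (bigD1 z) //= eqxx big1 ?mulr1 // => y /negbTE ->; done.
rewrite (eq_bigr _ (fun v _ => E v)) -(bigA_distr_bigA G).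
rewrite (bigD1 z) //= [X in _ * X]big1 ?mulr1.
  by rewrite (@big_bool R 0 +%R) /G /= eqxx mulr1 mulr0 addr0.
move=> y /negbTE yz; rewrite (@big_bool R 0 +%R) /G /= yz !mulr1; ring.
Qed.

Definition base (R : realType) (eps : R) (b : bool) : R := if b then 1 - eps else 0.
Definition gval (R : realType) (Y : finType) (eps : R)
  (bv : bool * {ffun Y -> bool}) (y : Y) : R := base eps bv.1 + eps * (bv.2 y)%:R.
Definition gen (R : realType) (Y : finType) (eps : R)
  (bv : bool * {ffun Y -> bool}) : Y -> 'I_2 -> R :=
  fun y a => if a == ord0 then gval eps bv y else 1 - gval eps bv y.

Definition hullF (R : realType) (Y : finType) (I : finType)
  (s : I -> Y -> 'I_2 -> R) (p : Y -> 'I_2 -> R) : Prop :=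
  exists w : I -> R, [/\ (forall i, 0 <= w i), \sum_i w i = 1 &
     forall y a, p y a = \sum_i w i * s i y a].

Lemma gen_vals (R : realType) (Y : finType) (eps : R) (bv : bool * {ffun Y -> bool}) y a :
  let x := gen eps bv y a in x = 0 \/ x = eps \/ x = 1 - eps \/ x = 1.
Proof.
rewrite /gen /gval /base; case: bv => [b v] /=.
case: (a == ord0); case: b; case: (v y) => /=;
  first [by left; ring | by right; left; ring | by right; right; left; ring
        | by right; right; right; ring].
Qed.

Lemma gen_Sp (R : realType) (Y : finType) (eps : R) (bv : bool * {ffun Y -> bool}) :
  0 <= eps -> eps < 1 -> Sp eps (gen eps bv).
Proof.
move=> e0 e1; case: bv => [b v]; split.
- move=> y a; rewrite /gen /gval /base /=.
  case: (a == ord0); case: b; case: (v y) => /=; lra.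
- move=> y; rewrite (sum2 _ a1_ne0) /gen /=; ring.
- move=> y y'; rewrite /gen /gval /base /=.
  case: b; case: (v y); case: (v y') => /=; lra.
Qed.

Lemma hull_Sp (R : realType) (Y I : finType) (eps : R) (s : I -> Y -> 'I_2 -> R) p :
  (forall i, Sp eps (s i)) -> hullF s p -> Sp eps p.
Proof.
move=> hs [w [w0 w1 pw]]; split.
- move=> y a; rewrite pw; apply: sumr_ge0 => i _; apply: mulr_ge0 => //.
  by case: (hs i) => h _ _; apply: h.
- move=> y; rewrite (eq_bigr _ (fun a _ => pw y a)) exchange_big -w1.
  apply: eq_bigr => i _.
  case: (hs i) => _ h _; rewrite -[RHS]mulr1 -(h y) mulr_sumr.
  by apply: eq_bigr.
- move=> y y'; rewrite !pw.
  have -> : \sum_i w i * s i y' ord0 + eps = \sum_i w i * (s i y' ord0 + eps).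
    by rewrite (eq_bigr _ (fun i _ => mulrDr _ _ _)) big_split /= -mulr_suml w1 mul1r.
  apply: ler_sum => i _; apply: ler_wpM2l => //.
  by case: (hs i) => _ _ ->.
Qed.

Lemma Sp_convex (R : realType) (Y : finType) (eps : R) (u v : Y -> 'I_2 -> R) t :
  Sp eps u -> Sp eps v -> 0 <= t <= 1 ->
  Sp eps (fun y a => t * u y a + (1 - t) * v y a).
Proof.
move=> [u0 u1 ue] [v0 v1 ve] /andP [t0 t1]; split.
- move=> y a; apply: addr_ge0; apply: mulr_ge0 => //; lra.
- move=> y; rewrite big_split /= -!mulr_sumr u1 v1; ring.
- move=> y y' /=; have := ue y y'; have := ve y y'.
  have := u0 y ord0; have := v0 y ord0; nra.
Qed.

Lemma Sp_hull (R : realType) (Y : finType) (eps : R) (p : Y -> 'I_2 -> R) :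
  0 <= eps -> eps < 1 -> Sp eps p -> hullF (gen eps) p.
Proof.
move=> e0 e1 [p0 p1 pe].
pose r y := p y ord0.
have r01 : forall y, 0 <= r y <= 1.
  move=> y; have := p1 y; rewrite (sum2 _ a1_ne0) => h.
  have := p0 y ord0; have := p0 y a1; rewrite /r; lra.
pose m := \big[Num.min/1]_y r y.
have mr : forall y, m <= r y.
  by move=> y; rewrite /m (bigD1 y) //= ge_min lexx.
have m01 : 0 <= m <= 1.
  rewrite /m; apply: (big_ind (fun x => 0 <= x <= 1)).
  - by rewrite lexx ler01.
  - move=> x x' /andP [x0 x1] /andP [x'0 x'1].
    by rewrite le_min x0 x'0 ge_min x1.
  - by move=> y _; apply: r01.
have rm : forall y, r y - eps <= m.
  move=> y; rewrite /m; apply: (big_ind (fun x => r y - eps <= x)).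
  - by have := r01 y; lra.
  - by move=> x x' h h'; rewrite le_min h h'.
  - by move=> z _; have := pe y z; rewrite /r; lra.
pose c := Num.min m (1 - eps).
have cr : forall y, c <= r y /\ r y <= c + eps.
  move=> y; split; first by rewrite /c ge_min mr.
  rewrite /c; case: (leP m (1 - eps)) => _.
    by have := rm y; lra.
  by have := r01 y; lra.
have c01 : 0 <= c <= 1 - eps.
  rewrite /c le_min ge_min lexx orbT andbT.
  case/andP: m01 => -> _ /=; lra.
pose dl y := if eps == 0 then 0 else (r y - c) / eps.
have dl01 : forall y, 0 <= dl y <= 1.
  move=> y; rewrite /dl; case: eqP => [_|/eqP en0]; first by rewrite lexx ler01.
  have ep : 0 < eps by rewrite lt_neqAle eq_sym en0.
  have [h1 h2] := cr y.
  apply/andP; split; first by apply: divr_ge0; lra.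
  by rewrite ler_pdivrMr // mul1r; lra.
have dlE : forall y, c + eps * dl y = r y.
  move=> y; rewrite /dl; case: eqP => [e00|/eqP en0].
    have [h1 h2] := cr y; rewrite e00 in h2 *; lra.
  by rewrite mulrC divfK //; ring.
pose tau := c / (1 - eps).
have e1' : 1 - eps != 0 by rewrite subr_eq0 eq_sym (lt_eqF e1).
have tau01 : 0 <= tau <= 1.
  case/andP: c01 => c0 c1.
  apply/andP; split; first by apply: divr_ge0; lra.
  by rewrite ler_pdivrMr ?subr_gt0 // mul1r.
have tauE : tau * (1 - eps) = c by rewrite /tau divfK.
pose wb (b : bool) := if b then tau else 1 - tau.
pose w (bv : bool * {ffun Y -> bool}) := wb bv.1 * Wt dl bv.2.
have wsum : \sum_i w i = 1.
  rewrite /w -(pair_bigA _ (fun b v => wb b * Wt dl v)) (@big_bool R 0 +%R) /=.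
  by rewrite -!mulr_sumr Wt_sum /wb; ring.
have coord : forall y, r y = \sum_i w i * gval eps i y.
  move=> y.
  rewrite -(pair_bigA _ (fun b v => w (b, v) * gval eps (b, v) y)) (@big_bool R 0 +%R) /=.
  have E : forall b, \sum_(v : {ffun Y -> bool}) w (b, v) * gval eps (b, v) y =
      wb b * base eps b * (\sum_v Wt dl v) + wb b * eps * (\sum_v Wt dl v * (v y)%:R).
    move=> b; rewrite !mulr_sumr -big_split /=; apply: eq_bigr => v _.
    rewrite /w /gval /=; ring.
  rewrite !E !Wt_sum Wt_coord /wb /base -dlE -tauE; ring.
exists w; split => //.
- move=> [b v]; rewrite /w /=; apply: mulr_ge0; last exact: Wt_ge0.
  by rewrite /wb; case: b; case/andP: tau01 => // ? ?; rewrite subr_ge0.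
- move=> y a; case: (eqVneq a ord0) => [->|an0].
    rewrite -/(r y) coord; apply: eq_bigr => i _; by rewrite /gen eqxx.
  have := p1 y; rewrite (sum2 _ an0) -/(r y) coord => h.
  have -> : p y a = 1 - \sum_i w i * gval eps i y by rewrite -h addrC addKr.
  rewrite -{1}wsum -sumrB; apply: eq_bigr => i _.
  by rewrite /gen (negbTE an0) mulrBr mulr1.
Qed.

Lemma vertex_gen (R : realType) (Y I : finType) (s : I -> Y -> 'I_2 -> R)
  (P : (Y -> 'I_2 -> R) -> Prop) p :
  (forall p, P p <-> hullF s p) -> is_vertex P p -> exists i, p = s i.
Proof.
move=> HP [Pp Hv]; have [w [w0 w1 pw]] := (HP p).1 Pp.
have [i wi] : exists i, 0 < w i.
  case/boolP: [exists i, 0 < w i] => [/existsP //|/existsPn H].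
  have : \sum_i w i <= 0.
    by apply: sumr_le0 => i _; have := H i; rewrite -leNgt.
  by rewrite w1 ler10.
have wi1 : w i <= 1.
  rewrite -w1 (bigD1 i) //= lerDl; apply: sumr_ge0 => j _; exact: w0.
pose t := w i / 2.
have t0 : 0 < t by rewrite /t divr_gt0.
have t1 : t < 1 by rewrite /t; lra.
have t1' : 1 - t != 0 by rewrite subr_eq0 eq_sym (lt_eqF t1).
pose w' j := (w j - t * (j == i)%:R) / (1 - t).
pose q := fun y a => \sum_j w' j * s j y a.
have Pq : P q.
  apply/HP; exists w'; split => //.
  - move=> j; rewrite /w'; apply: divr_ge0; last by lra.
    case: eqP => [->|_]; rewrite ?mulr1 ?mulr0 ?subr0 //; rewrite /t; lra.
  - rewrite /w' -mulr_suml sumrB w1 (bigD1 i) //= eqxx mulr1 big1 ?addr0.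
      by rewrite divff.
    by move=> j /negbTE ->; rewrite mulr0.
have Psi : P (s i).
  apply/HP; exists (fun j => (j == i)%:R); split.
  - by move=> j; rewrite ler0n.
  - rewrite (bigD1 i) //= eqxx big1 ?addr0 // => j /negbTE -> //.
  - move=> y a; rewrite (bigD1 i) //= eqxx mul1r big1 ?addr0 //.
    by move=> j /negbTE ->; rewrite mul0r.
have E : p = (fun y a => t * s i y a + (1 - t) * q y a).
  apply/funext => y; apply/funext => a.
  rewrite pw /q mulr_sumr.
  have -> : \sum_j (1 - t) * (w' j * s j y a) =
            \sum_j (w j * s j y a - t * (j == i)%:R * s j y a).
    apply: eq_bigr => j _; rewrite /w'; field; exact: t1'.
  rewrite sumrB.
  have -> : \sum_j t * (j == i)%:R * s j y a = t * s i y a.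
    rewrite (bigD1 i) //= eqxx mulr1 big1 ?addr0 //.
    by move=> j /negbTE ->; rewrite mulr0 mul0r.
  ring.
have [<- _] := Hv _ _ _ Psi Pq (introT andP (conj t0 t1)) E.
by exists i.
Qed.

Lemma hull_reindex (R : realType) (Y I : finType) (s : I -> Y -> 'I_2 -> R) p :
  hullF s p <->
  exists w : 'I_#|{: I}| -> R,
    [/\ (forall i, 0 <= w i), \sum_(i < #|{: I}|) w i = 1 &
        forall y a, p y a = \sum_(i < #|{: I}|) w i * s (enum_val i) y a].
Proof.
split.
- move=> [w [w0 w1 pw]]; exists (fun i => w (enum_val i)); split => //.
  + by rewrite -(big_enum_val (A := {: I}) w) /=.
  + by move=> y a; rewrite pw (big_enum_val (A := {: I}) (fun i => w i * s i y a)).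
- move=> [w [w0 w1 pw]]; exists (fun x => w (enum_rank x)); split => //.
  + rewrite (big_enum_val (A := {: I}) (fun x => w (enum_rank x))) /=.
    by rewrite -w1; apply: eq_bigr => i _; rewrite enum_valK.
  + move=> y a; rewrite pw (big_enum_val (A := {: I}) (fun x => w (enum_rank x) * s x y a)) /=.
    by apply: eq_bigr => i _; rewrite enum_valK.
Qed.

Unset Implicit Arguments.

Theorem mainTheorem2 (R : realType) (X Y : finType) (xs : X) (eps : R) :
  (2 <= #|X|)%N -> (2 <= #|Y|)%N -> 0 <= eps -> eps < 1 ->
  is_convex_set (@P2 R X Y 'I_2 xs eps) /\
  is_polytope (@P2 R X Y 'I_2 xs eps) /\
  (forall pext : Y -> 'I_2 -> R, is_vertex (@P2 R X Y 'I_2 xs eps) pext ->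
     forall (a : 'I_2) (y : Y),
       pext y a = 0 \/ pext y a = eps \/ pext y a = 1 - eps \/ pext y a = 1).
Proof.
move=> _ _ e0 e1.
have HP : forall p, @P2 R X Y 'I_2 xs eps p <-> hullF (gen eps) p.
  move=> p; split.
  - by move=> /(P2_Sp e0) /(Sp_hull e0 e1).
  - move=> h; apply: Sp_P2; apply: hull_Sp h => i; exact: gen_Sp.
split; [|split].
- move=> u v t Pu Pv t01; apply: Sp_P2.
  exact: Sp_convex (P2_Sp e0 Pu) (P2_Sp e0 Pv) t01.
- exists #|{: bool * {ffun Y -> bool}}|, (fun i => gen eps (enum_val i)).
  move=> p; rewrite HP; exact: hull_reindex.
- move=> pext /(vertex_gen HP) [i ->] a y; exact: gen_vals.
Qed.
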